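(* (1) Invariance: if $t\to_w u$ then $t\equiv^{typ} u$. (2) Compatibility: if $t\equiv^{typ}u$ then $C\langle t\rangle\equiv^{typ} C\langle u\rangle$ for every context $C$.
   Context: Terms: $t ::= x \mid \lambda x.t \mid t\,u \mid t[x\backslash u]$ ($t[x\backslash u]$ an explicit substitution binding $x$ in $t$; terms up to $\alpha$). Values $v ::= \lambda x.t$. Substitution contexts $S ::= \langle\cdot\rangle\mid S[x\backslash u]$. Weak contexts $W ::= \langle\cdot\rangle \mid W\,t \mid t\,W \mid t[x\backslash W] \mid W[x\backslash u]$; $W\langle\langle t\rangle\rangle$ is plugging without capture of free variables of $t$. Root rules: $S\langle\lambda x.t\rangle u\mapsto_m S\langle t[x\backslash u]\rangle$; $W\langle\langle x\rangle\rangle[x\backslash u]\mapsto_e W\langle\langle u\rangle\rangle[x\backslash u]$; $t[x\backslash S\langle v\rangle]\mapsto_{gcv} S\langle t\rangle$ if $x\notin\mathrm{fv}(t)$. $\to_w$ is the union of their closures under weak contexts. A context $C$ is a term with exactly one hole, anywhere (also under abstraction or inside ESs). Silly multi types: linear types $L ::= \mathtt{n} \mid M\multimap L$; multi types $M ::= [L_i]_{i\in I}$ finite multisets ($\mathbf{0}$ empty, $\uplus$ sum). Type contexts $\Gamma$ map variables to multi types with finite support; $\uplus$ pointwise; $\Gamma\setminus\!\!\setminus x$ sets $x$ to $\mathbf{0}$. Rules: (ax) $x:[L]\vdash^{(0,1)} x:L$; (many) from $(\Gamma_i\vdash^{(m_i,e_i)} t : L_i)_{i\in I}$, $I$ finite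 possibly empty, infer $\uplus_i\Gamma_i\vdash^{(\sum m_i,\sum e_i)} t : [L_i]_{i\in I}$; ($\mathrm{ax}_\lambda$) $\vdash^{(0,0)}\lambda x.t:\mathtt{n}$; ($\lambda$) from $\Gamma\vdash^{(m,e)}t:L$ infer $\Gamma\setminus\!\!\setminus x\vdash^{(m,e)}\lambda x.t:\Gamma(x)\multimap L$; (@) from $\Gamma\vdash^{(m,e)} t : M\multimap L$ and $\Delta\vdash^{(m',e')} u : M\uplus[\mathtt{n}]$ infer $\Gamma\uplus\Delta\vdash^{(m+m'+1,e+e')} tu : L$; (ES) from $\Gamma\vdash^{(m,e)} t:L$ and $\Delta\vdash^{(m',e')}u:\Gamma(x)\uplus[\mathtt{n}]$ infer $(\Gamma\setminus\!\!\setminus x)\uplus\Delta\vdash^{(m+m',e+e')} t[x\backslash u]:L$. Type equivalence: $t\equiv^{typ}u$ iff for all $\Gamma$ and linear types $L$, $\Gamma\vdash t:L$ is derivable iff $\Gamma\vdash u:L$ is derivable (indices ignored). *)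

(* Defs.v *)
From Stdlib Require Import List Arith.
Import ListNotations.

(* ES t u  represents  t[x\u]; x is de Bruijn index 0 in t (bound by the ES),
   u lives in the outer scope. *)
Inductive term : Type :=
| Var (n : nat)
| Lam (t : term)
| App (t u : term)
| ES  (t u : term).

Definition uprn (r : nat -> nat) : nat -> nat :=
  fun n => match n with 0 => 0 | S m => S (r m) end.

Fixpoint ren (r : nat -> nat) (t : term) : term :=
  match t with
  | Var n => Var (r n)
  | Lam t => Lam (ren (uprn r) t)
  | App t u => App (ren r t) (ren r u)
  | ES t u => ES (ren (uprn r) t) (ren r u)
  end.

Definition lift (k : nat) (t : term) : term := ren (fun i => i + k) t.

Fixpoint occurs (n : nat) (t : term) : bool :=
  match t with
  | Var m => Nat.eqb n m
  | Lam t => occurs (S n) t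
  | App t u => occurs n t || occurs n u
  | ES t u => occurs (S n) t || occurs n u
  end.

Definition is_value (t : term) : Prop := exists b, t = Lam b.

(* list head = outermost ES:  splug (u :: S) t = (splug S t)[x\u] *)
Fixpoint splug (S : list term) (t : term) : term :=
  match S with
  | [] => t
  | u :: S' => ES (splug S' t) u
  end.

Inductive wctx : Type :=
| WHole
| WAppL (W : wctx) (t : term)
| WAppR (t : term) (W : wctx)
| WESR  (t : term) (W : wctx)
| WESL  (W : wctx) (u : term).

Fixpoint wplug (W : wctx) (s : term) : term :=
  match W with
  | WHole => s
  | WAppL W t => App (wplug W s) t
  | WAppR t W => App t (wplug W s)
  | WESR t W => ES t (wplug W s)
  | WESL W u => ES (wplug W s) u
  end.

(* number of binders of W above its hole *)
Fixpoint wdepth (W : wctx) : nat :=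
  match W with
  | WHole => 0
  | WAppL W _ | WAppR _ W | WESR _ W => wdepth W
  | WESL W _ => S (wdepth W)
  end.

Inductive root : term -> term -> Prop :=
(* S<lam x.t> u  |->m  S<t[x\u]> *)
| root_m (Sc : list term) (t u : term) :
    root (App (splug Sc (Lam t)) u) (splug Sc (ES t (lift (length Sc) u)))
(* W<<x>>[x\u]  |->e  W<<u>>[x\u]  (no capture by W) *)
| root_e (W : wctx) (u : term) :
    root (ES (wplug W (Var (wdepth W))) u)
         (ES (wplug W (lift (S (wdepth W)) u)) u)
(* t[x\S<v>]  |->gcv  S<t>  if x notin fv(t) *)
| root_gcv (t : term) (Sc : list term) (v : term) :
    is_value v -> occurs 0 t = false ->
    root (ES t (splug Sc v)) (splug Sc (ren (fun i => pred i + length Sc) t)).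

Inductive wstep : term -> term -> Prop :=
| wstep_ctx (W : wctx) (t u : term) : root t u -> wstep (wplug W t) (wplug W u).

Inductive cctx : Type :=
| CHole
| CLam  (C : cctx)
| CAppL (C : cctx) (t : term)
| CAppR (t : term) (C : cctx)
| CESL  (C : cctx) (u : term)
| CESR  (t : term) (C : cctx).

(* plugging may capture (de Bruijn: plain syntactic plugging) *)
Fixpoint cplug (C : cctx) (s : term) : term :=
  match C with
  | CHole => s
  | CLam C => Lam (cplug C s)
  | CAppL C t => App (cplug C s) t
  | CAppR t C => App t (cplug C s)
  | CESL C u => ES (cplug C s) u
  | CESR t C => ES t (cplug C s)
  end.

(* Multi types are finite multisets, represented by lists taken up to
   permutation (recursively, see ty_eq / m_eq). *)
Inductive lty : Type :=
| TN
| TArr (M : list lty) (L : lty).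

Definition mty := list lty.

Inductive ty_eq : lty -> lty -> Prop :=
| teq_n : ty_eq TN TN
| teq_arr M M' L L' : m_eq M M' -> ty_eq L L' -> ty_eq (TArr M L) (TArr M' L')
with m_eq : mty -> mty -> Prop :=
| meq_nil : m_eq [] []
| meq_cons L L' M M' : ty_eq L L' -> m_eq M M' -> m_eq (L :: M) (L' :: M')
| meq_swap L1 L2 M : m_eq (L1 :: L2 :: M) (L2 :: L1 :: M)
| meq_trans M1 M2 M3 : m_eq M1 M2 -> m_eq M2 M3 -> m_eq M1 M3.

Definition tctx := nat -> mty.
Definition cempty : tctx := fun _ => [].
Definition csum (G D : tctx) : tctx := fun x => G x ++ D x.
Definition csingle (x : nat) (M : mty) : tctx :=
  fun y => if Nat.eqb y x then M else [].
(* G \\ x for the binder x = index 0, then leaving its scope *)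
Definition ctail (G : tctx) : tctx := fun n => G (S n).
Definition ctx_eq (G G' : tctx) : Prop := forall x, m_eq (G x) (G' x).

(* Typing judgments (indices (m,e) omitted: type equivalence ignores them).
   The conv rules express that contexts and types are multisets. *)
Inductive tyL : tctx -> term -> lty -> Prop :=
| ty_ax x L : tyL (csingle x [L]) (Var x) L
| ty_axlam t : tyL cempty (Lam t) TN
| ty_lam G t L : tyL G t L -> tyL (ctail G) (Lam t) (TArr (G 0) L)
| ty_app G D t u M L :
    tyL G t (TArr M L) -> tyM D u (M ++ [TN]) -> tyL (csum G D) (App t u) L
| ty_es G D t u L :
    tyL G t L -> tyM D u (G 0 ++ [TN]) -> tyL (csum (ctail G) D) (ES t u) L
| ty_convL G G' t L L' : tyL G t L -> ctx_eq G G' -> ty_eq L L' -> tyL G' t L'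
with tyM : tctx -> term -> mty -> Prop :=
| tym_nil t : tyM cempty t []
| tym_cons G D t L M : tyL G t L -> tyM D t M -> tyM (csum G D) t (L :: M)
| ty_convM G G' t M M' : tyM G t M -> ctx_eq G G' -> m_eq M M' -> tyM G' t M'.

Definition typ_equiv (t u : term) : Prop :=
  forall (G : tctx) (L : lty), tyL G t L <-> tyL G u L.

(* Main.v *)
Require Import Defs.
From Stdlib Require Import List Arith Lia Permutation FunctionalExtensionality Bool.
Import ListNotations.


Fixpoint ty_eq_refl (L : lty) : ty_eq L L :=
  match L with
  | TN => teq_n
  | TArr M L' => teq_arr M M L' L'
      ((fix mr (M : list lty) : m_eq M M :=
          match M with
          | [] => meq_nil
          | a :: M' => meq_cons a a M' M' (ty_eq_refl a) (mr M')
          end) M) (ty_eq_refl L')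
  end.

Lemma m_eq_refl : forall M, m_eq M M.
Proof. induction M; constructor; auto using ty_eq_refl. Qed.

Scheme ty_eq_mind := Induction for ty_eq Sort Prop
  with m_eq_mind := Induction for m_eq Sort Prop.
Combined Scheme eq_mutind from ty_eq_mind, m_eq_mind.

Lemma eq_sym_both :
  (forall L L', ty_eq L L' -> ty_eq L' L) /\ (forall M M', m_eq M M' -> m_eq M' M).
Proof.
  apply eq_mutind; intros; try solve [constructor; auto].
  eapply meq_trans; eauto.
Qed.
Lemma ty_eq_sym : forall L L', ty_eq L L' -> ty_eq L' L. Proof. apply eq_sym_both. Qed.
Lemma m_eq_sym : forall M M', m_eq M M' -> m_eq M' M. Proof. apply eq_sym_both. Qed.

Lemma ty_eq_trans : forall L1 L2 L3, ty_eq L1 L2 -> ty_eq L2 L3 -> ty_eq L1 L3.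
Proof.
  intros L1 L2 L3 H; revert L3; induction H; intros L3 H3; inversion H3; subst; auto.
  constructor; eauto using meq_trans.
Qed.

Lemma m_eq_length : forall M M', m_eq M M' -> length M = length M'.
Proof. intros M M' H; induction H; simpl; congruence. Qed.
Lemma m_eq_nil : forall M, m_eq [] M -> M = [].
Proof. intros M H; apply m_eq_length in H; destruct M; simpl in *; congruence. Qed.
Lemma m_eq_nil' : forall M, m_eq M [] -> M = [].
Proof. intros M H; apply m_eq_length in H; destruct M; simpl in *; congruence. Qed.

Lemma perm_meq : forall M M', Permutation M M' -> m_eq M M'.
Proof.
  intros M M' H; induction H.
  - constructor.
  - constructor; auto using ty_eq_refl.
  - apply meq_swap.
  - eapply meq_trans; eauto.
Qed.

Lemma m_eq_app_r : forall A B B', m_eq B B' -> m_eq (A ++ B) (A ++ B').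
Proof. induction A; simpl; intros; auto. constructor; auto using ty_eq_refl. Qed.
Lemma m_eq_app_l : forall A A' B, m_eq A A' -> m_eq (A ++ B) (A' ++ B).
Proof.
  intros A A' B H; induction H; simpl.
  - apply m_eq_refl.
  - constructor; auto.
  - apply meq_swap.
  - eapply meq_trans; eauto.
Qed.
Lemma m_eq_app : forall A A' B B', m_eq A A' -> m_eq B B' -> m_eq (A ++ B) (A' ++ B').
Proof. intros; eapply meq_trans; [apply m_eq_app_l; eauto| apply m_eq_app_r; eauto]. Qed.

Lemma ctx_eq_refl : forall G, ctx_eq G G. Proof. intros G x; apply m_eq_refl. Qed.
Lemma ctx_eq_sym : forall G G', ctx_eq G G' -> ctx_eq G' G.
Proof. intros G G' H x; apply m_eq_sym; auto. Qed.
Lemma ctx_eq_trans : forall G1 G2 G3, ctx_eq G1 G2 -> ctx_eq G2 G3 -> ctx_eq G1 G3.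
Proof. intros G1 G2 G3 H1 H2 x; eapply meq_trans; eauto. Qed.
Lemma csum_eq : forall G G' D D', ctx_eq G G' -> ctx_eq D D' -> ctx_eq (csum G D) (csum G' D').
Proof. intros; intro x; unfold csum; apply m_eq_app; auto. Qed.
Lemma ctail_eq : forall G G', ctx_eq G G' -> ctx_eq (ctail G) (ctail G').
Proof. intros G G' H x; apply H. Qed.
Lemma ctx_perm : forall G G', (forall x, Permutation (G x) (G' x)) -> ctx_eq G G'.
Proof. intros G G' H x; apply perm_meq; auto. Qed.

(* permutation solver *)
Lemma perm_front_step : forall (A:Type) (a b R R' : list A),
  Permutation R (a ++ R') -> Permutation (b ++ R) (a ++ b ++ R').
Proof. intros. rewrite H. rewrite !app_assoc. apply Permutation_app_tail, Permutation_app_comm. Qed.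
Lemma perm_front_last : forall (A:Type) (a : list A), Permutation a (a ++ []).
Proof. intros; rewrite app_nil_r; reflexivity. Qed.
Lemma perm_front_last2 : forall (A:Type) (a b : list A), Permutation (b ++ a) (a ++ b).
Proof. intros; apply Permutation_app_comm. Qed.
Lemma perm_main_step : forall (A:Type) (a L R R' : list A),
  Permutation R (a ++ R') -> Permutation L R' -> Permutation (a ++ L) R.
Proof. intros. rewrite H, H0. reflexivity. Qed.
Lemma perm_main_last : forall (A:Type) (a R R' : list A),
  Permutation R (a ++ R') -> Permutation [] R' -> Permutation a R.
Proof. intros. rewrite H, <- H0, app_nil_r. reflexivity. Qed.

Ltac front :=
  match goal with
  | |- Permutation (?a ++ _) (?a ++ _) => apply Permutation_refl
  | |- Permutation ?a (?a ++ _) => apply perm_front_last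
  | |- Permutation (?b ++ ?a) (?a ++ _) => apply perm_front_last2
  | |- Permutation (?b ++ _) (?a ++ _) => eapply perm_front_step; front
  end.
Ltac psolve :=
  repeat rewrite <- app_assoc; repeat rewrite app_nil_r; simpl;
  repeat rewrite <- app_assoc; repeat rewrite app_nil_r;
  match goal with
  | |- Permutation ?a ?a => apply Permutation_refl
  | |- Permutation [] [] => apply Permutation_refl
  | |- Permutation (?a ++ _) _ => eapply perm_main_step; [front | psolve]
  | |- Permutation ?a _ => eapply perm_main_last; [front | psolve]
  end.
Ltac cperm := apply ctx_perm; intro; unfold csum, cempty, ctail; simpl; psolve.



Lemma csum_nil_r : forall G, csum G cempty = G.
Proof. intros; apply functional_extensionality; intro; unfold csum, cempty; apply app_nil_r. Qed.
Lemma csum_nil_l : forall G, csum cempty G = G.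
Proof. reflexivity. Qed.

Lemma tyL_conv_ctx : forall G G' t L, tyL G t L -> ctx_eq G G' -> tyL G' t L.
Proof. intros; eapply ty_convL; eauto using ty_eq_refl. Qed.
Lemma tyM_conv_ctx : forall G G' t M, tyM G t M -> ctx_eq G G' -> tyM G' t M.
Proof. intros; eapply ty_convM; eauto using m_eq_refl. Qed.
Lemma tyM_conv_ty : forall G t M M', tyM G t M -> m_eq M M' -> tyM G t M'.
Proof. intros; eapply ty_convM; eauto using ctx_eq_refl. Qed.
Lemma tyL_conv_ty : forall G t L L', tyL G t L -> ty_eq L L' -> tyL G t L'.
Proof. intros; eapply ty_convL; eauto using ctx_eq_refl. Qed.

Fixpoint csumL (ps : list (tctx * lty)) : tctx :=
  match ps with [] => cempty | p :: ps => csum (fst p) (csumL ps) end.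

Definition typedL t (p : tctx * lty) := tyL (fst p) t (snd p).

Lemma tyM_nf : forall G t M, tyM G t M ->
  exists ps, Forall (typedL t) ps /\ ctx_eq (csumL ps) G /\ m_eq (map snd ps) M.
Proof.
  intros G t M H; induction H.
  - exists []; repeat split; auto using ctx_eq_refl; constructor.
  - destruct IHtyM as (ps & K1 & K2 & K3).
    exists ((G, L) :: ps); repeat split; simpl.
    + constructor; auto.
    + apply csum_eq; auto using ctx_eq_refl.
    + constructor; auto using ty_eq_refl.
  - destruct IHtyM as (ps & K1 & K2 & K3).
    exists ps; repeat split; auto.
    + eapply ctx_eq_trans; eauto.
    + eapply meq_trans; eauto.
Qed.

Lemma nf_tyM : forall t ps, Forall (typedL t) ps -> tyM (csumL ps) t (map snd ps).
Proof.
  intros t ps H; induction H; simpl.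
  - constructor.
  - constructor; auto.
Qed.

Lemma nf_perm : forall A B, m_eq A B -> forall t ps, map snd ps = A -> Forall (typedL t) ps ->
  exists qs, Forall (typedL t) qs /\ ctx_eq (csumL ps) (csumL qs) /\ map snd qs = B.
Proof.
  intros A B H; induction H; intros t ps Hm HF.
  - exists ps; repeat split; auto using ctx_eq_refl. 
  - destruct ps as [|[G0 L0] ps]; simpl in Hm; try discriminate.
    injection Hm; intros; subst. inversion HF; subst.
    destruct (IHm_eq t ps eq_refl H4) as (qs & Q1 & Q2 & Q3).
    exists ((G0, L') :: qs); repeat split; simpl.
    + constructor; auto. unfold typedL in *; simpl in *. eapply tyL_conv_ty; eauto.
    + apply csum_eq; auto using ctx_eq_refl.
    + congruence.
  - destruct ps as [|p1 [|p2 ps]]; simpl in Hm; try discriminate.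
    injection Hm; intros; subst. inversion HF; subst. inversion H2; subst.
    exists (p2 :: p1 :: ps); repeat split; simpl.
    + repeat constructor; auto.
    + cperm.
  - destruct (IHm_eq1 t ps Hm HF) as (qs & Q1 & Q2 & Q3).
    destruct (IHm_eq2 t qs Q3 Q1) as (rs & R1 & R2 & R3).
    exists rs; repeat split; auto. eapply ctx_eq_trans; eauto.
Qed.

Lemma csumL_app : forall ps qs, csumL (ps ++ qs) = csum (csumL ps) (csumL qs).
Proof.
  induction ps; intros; simpl.
  - reflexivity.
  - rewrite IHps. apply functional_extensionality; intro; unfold csum; apply app_assoc.
Qed.

Lemma tyM_split : forall G t M1 M2, tyM G t (M1 ++ M2) ->
  exists G1 G2, tyM G1 t M1 /\ tyM G2 t M2 /\ ctx_eq (csum G1 G2) G.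
Proof.
  intros G t M1 M2 H. apply tyM_nf in H as (ps & H1 & H2 & H3).
  destruct (nf_perm _ _ H3 t ps eq_refl H1) as (qs & Q1 & Q2 & Q3).
  apply map_eq_app in Q3 as (qs1 & qs2 & E & E1 & E2). subst.
  apply Forall_app in Q1 as [F1 F2].
  exists (csumL qs1), (csumL qs2); repeat split.
  - apply nf_tyM; auto.
  - apply nf_tyM; auto.
  - rewrite <- csumL_app. eapply ctx_eq_trans; [apply ctx_eq_sym; eauto|]; auto.
Qed.

Lemma tyM_app : forall G1 G2 t M1 M2, tyM G1 t M1 -> tyM G2 t M2 -> tyM (csum G1 G2) t (M1 ++ M2).
Proof.
  intros G1 G2 t M1 M2 H1 H2.
  apply tyM_nf in H1 as (ps & P1 & P2 & P3).
  apply tyM_nf in H2 as (qs & Q1 & Q2 & Q3).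
  eapply ty_convM; [apply (nf_tyM t (ps ++ qs)); apply Forall_app; auto| |].
  - rewrite csumL_app. apply csum_eq; auto.
  - rewrite map_app. apply m_eq_app; auto.
Qed.

Lemma tyM_nil_inv : forall G t, tyM G t [] -> forall x, G x = [].
Proof.
  intros G t H. apply tyM_nf in H as (ps & P1 & P2 & P3).
  apply m_eq_nil' in P3. destruct ps; simpl in *; try discriminate.
  intro x. specialize (P2 x). apply m_eq_nil in P2. auto.
Qed.

Lemma tyM_single_inv : forall G t L, tyM G t [L] -> tyL G t L.
Proof.
  intros G t L H. apply tyM_nf in H as (ps & P1 & P2 & P3).
  destruct (nf_perm _ _ P3 t ps eq_refl P1) as (qs & Q1 & Q2 & Q3).
  destruct qs as [|[G0 L0] [|]]; simpl in Q3; try discriminate. injection Q3; intros; subst.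
  inversion Q1; subst. unfold typedL in *; simpl in *.
  eapply tyL_conv_ctx; eauto. simpl in Q2. rewrite csum_nil_r in Q2.
  eapply ctx_eq_trans; [apply ctx_eq_sym; eauto| auto].
Qed.

Lemma tyM_single : forall G t L, tyL G t L -> tyM G t [L].
Proof.
  intros. rewrite <- (csum_nil_r G). constructor; auto. constructor.
Qed.

Lemma inv_var : forall G t L, tyL G t L -> forall x, t = Var x -> ctx_eq G (csingle x [L]).
Proof.
  intros G t L H; induction H; intros y E; try discriminate.
  - injection E; intros; subst; apply ctx_eq_refl.
  - eapply ctx_eq_trans; [apply ctx_eq_sym; eauto|]. eapply ctx_eq_trans; [eapply IHtyL; eauto|].
    intro z; unfold csingle; destruct (Nat.eqb z y); [constructor; auto; constructor | apply m_eq_refl].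
Qed.

Lemma ty_eq_TN : forall L, ty_eq TN L -> L = TN.
Proof. intros L H; inversion H; auto. Qed.
Lemma ty_eq_TN' : forall L, ty_eq L TN -> L = TN.
Proof. intros L H; inversion H; auto. Qed.

Lemma inv_lam : forall G t L, tyL G t L -> forall b, t = Lam b ->
  (ctx_eq G cempty /\ L = TN) \/
  (exists G' L', tyL G' b L' /\ ctx_eq (ctail G') G /\ ty_eq (TArr (G' 0) L') L).
Proof.
  intros G t L H; induction H; intros b E; try discriminate.
  - left; split; auto using ctx_eq_refl.
  - injection E; intros; subst. right. exists G, L; repeat split; auto using ctx_eq_refl, ty_eq_refl.
  - destruct (IHtyL b E) as [[H2 H3]|(G2 & L2 & H2 & H3 & H4)].
    + left; subst. split; [eapply ctx_eq_trans; [apply ctx_eq_sym|]; eauto | apply ty_eq_TN; auto].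
    + right. exists G2, L2; repeat split; auto.
      * eapply ctx_eq_trans; eauto.
      * eapply ty_eq_trans; eauto.
Qed.

Lemma inv_app : forall G t0 L, tyL G t0 L -> forall t u, t0 = App t u ->
  exists G1 D M L', tyL G1 t (TArr M L') /\ tyM D u (M ++ [TN]) /\
    ctx_eq (csum G1 D) G /\ ty_eq L' L.
Proof.
  intros G t0 L H; induction H; intros t1 u1 E; try discriminate.
  - injection E; intros; subst. exists G, D, M, L; repeat split; auto using ctx_eq_refl, ty_eq_refl.
  - destruct (IHtyL _ _ E) as (G1 & D1 & M1 & L1 & H2 & H3 & H4 & H5).
    exists G1, D1, M1, L1; repeat split; auto.
    + eapply ctx_eq_trans; eauto.
    + eapply ty_eq_trans; eauto.
Qed.

Lemma inv_es : forall G t0 L, tyL G t0 L -> forall t u, t0 = ES t u ->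
  exists G1 D L', tyL G1 t L' /\ tyM D u (G1 0 ++ [TN]) /\
    ctx_eq (csum (ctail G1) D) G /\ ty_eq L' L.
Proof.
  intros G t0 L H; induction H; intros t1 u1 E; try discriminate.
  - injection E; intros; subst. exists G, D, L; repeat split; auto using ctx_eq_refl, ty_eq_refl.
  - destruct (IHtyL _ _ E) as (G1 & D1 & L1 & H2 & H3 & H4 & H5).
    exists G1, D1, L1; repeat split; auto.
    + eapply ctx_eq_trans; eauto.
    + eapply ty_eq_trans; eauto.
Qed.

Lemma tyES_eq : forall G1 D t u L M, tyL G1 t L -> tyM D u M -> m_eq M (G1 0 ++ [TN]) ->
  tyL (csum (ctail G1) D) (ES t u) L.
Proof. intros. constructor; auto. eapply tyM_conv_ty; eauto. Qed.

Scheme tyL_mind := Induction for tyL Sort Prop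
  with tyM_mind := Induction for tyM Sort Prop.
Combined Scheme ty_mutind from tyL_mind, tyM_mind.

Lemma compat_dir : forall t u, (forall G L, tyL G t L -> tyL G u L) ->
  (forall G t0 L, tyL G t0 L -> forall C, t0 = cplug C t -> tyL G (cplug C u) L) /\
  (forall G t0 M, tyM G t0 M -> forall C, t0 = cplug C t -> tyM G (cplug C u) M).
Proof.
  intros t u Htu. apply ty_mutind; intros.
  - destruct C; simpl in *; try discriminate. subst. apply Htu; constructor.
  - destruct C; simpl in *; try discriminate.
    + subst. apply Htu; constructor.
    + constructor.
  - destruct C; simpl in *; try discriminate.
    + subst. apply Htu; constructor; auto.
    + injection H0; intros; subst. constructor; auto.
  - destruct C; simpl in *; try discriminate.
    + subst. apply Htu; econstructor; eauto.
    + injection H1; intros; subst. econstructor; eauto.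
    + injection H1; intros; subst. econstructor; eauto.
  - destruct C; simpl in *; try discriminate.
    + subst. apply Htu; econstructor; eauto.
    + injection H1; intros; subst. econstructor; eauto.
    + injection H1; intros; subst. econstructor; eauto.
  - econstructor; eauto.
  - constructor.
  - constructor; auto.
  - econstructor; eauto.
Qed.

Lemma compat : forall t u, typ_equiv t u -> forall C, typ_equiv (cplug C t) (cplug C u).
Proof.
  intros t u H C G L; split; intro Hd.
  - eapply (proj1 (compat_dir t u (fun G L => proj1 (H G L)))); eauto.
  - eapply (proj1 (compat_dir u t (fun G L => proj2 (H G L)))); eauto.
Qed.

Lemma typ_equiv_trans : forall a b c, typ_equiv a b -> typ_equiv b c -> typ_equiv a c.
Proof. intros a b c H1 H2 G L; rewrite (H1 G L); auto. Qed.
Lemma typ_equiv_sym : forall a b, typ_equiv a b -> typ_equiv b a.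
Proof. intros a b H G L; rewrite (H G L); tauto. Qed.


Lemma ren_ext : forall t f g, (forall i, f i = g i) -> ren f t = ren g t.
Proof.
  induction t; intros f g H; simpl; f_equal; auto;
  try (apply IHt || apply IHt1); intros [|i]; simpl; auto.
Qed.

Lemma ren_ren : forall t f g, ren f (ren g t) = ren (fun i => f (g i)) t.
Proof.
  induction t; intros f g; simpl; f_equal; auto;
  try rewrite IHt; try rewrite IHt1; apply ren_ext; intros [|i]; simpl; auto.
Qed.

Lemma ren_id : forall t f, (forall i, f i = i) -> ren f t = t.
Proof.
  induction t; intros f H; simpl; f_equal; auto;
  try (apply IHt || apply IHt1); intros [|i]; simpl; auto.
Qed.

Lemma lift_lift : forall t a b, lift a (lift b t) = lift (b + a) t.
Proof. intros; unfold lift; rewrite ren_ren; apply ren_ext; intros; lia. Qed.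
Lemma lift0 : forall t, lift 0 t = t.
Proof. intros; unfold lift; apply ren_id; intros; lia. Qed.

Lemma ren_ext_occ : forall t f g, (forall i, occurs i t = true -> f i = g i) -> ren f t = ren g t.
Proof.
  induction t; intros f g H; simpl in *.
  - f_equal. apply H. apply Nat.eqb_refl.
  - f_equal. apply IHt. intros [|i] Hi; simpl; [reflexivity| f_equal; apply H; exact Hi].
  - f_equal; [apply IHt1|apply IHt2]; intros i Hi; apply H; rewrite Hi; simpl; auto using orb_true_r.
  - f_equal; [apply IHt1|apply IHt2].
    + intros [|i] Hi; simpl; [reflexivity| f_equal; apply H; rewrite Hi; reflexivity].
    + intros i Hi; apply H; rewrite Hi; apply orb_true_r.
Qed.

Definition pull (s : nat -> option nat) (G : tctx) : tctx :=
  fun y => match s y with Some x => G x | None => [] end.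
Definition ups (s : nat -> option nat) : nat -> option nat :=
  fun y => match y with 0 => Some 0 | S y' => option_map S (s y') end.

Lemma ups_ok1 : forall r s, (forall x, s (r x) = Some x) -> forall x, ups s (uprn r x) = Some x.
Proof. intros r s H [|x]; simpl; auto. rewrite H; auto. Qed.
Lemma ups_ok2 : forall r s, (forall y x, s y = Some x -> r x = y) ->
  forall y x, ups s y = Some x -> uprn r x = y.
Proof.
  intros r s H [|y] x E; simpl in E.
  - injection E; intros; subst; auto.
  - destruct (s y) eqn:Hs; simpl in E; try discriminate. injection E; intros; subst.
    simpl. f_equal. auto.
Qed.

Lemma pull_csum : forall s G D, pull s (csum G D) = csum (pull s G) (pull s D).
Proof. intros; apply functional_extensionality; intro y; unfold pull, csum; destruct (s y); auto. Qed.
Lemma pull_ctail : forall s G, ctail (pull (ups s) G) = pull s (ctail G).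
Proof. intros; apply functional_extensionality; intro y; unfold pull, ctail; simpl; destruct (s y); auto. Qed.
Lemma pull_eq : forall s G G', ctx_eq G G' -> ctx_eq (pull s G) (pull s G').
Proof. intros s G G' H y; unfold pull; destruct (s y); auto. constructor. Qed.

Lemma ren_fwd :
  (forall G t L, tyL G t L -> forall r s, (forall x, s (r x) = Some x) ->
     (forall y x, s y = Some x -> r x = y) -> tyL (pull s G) (ren r t) L) /\
  (forall G t M, tyM G t M -> forall r s, (forall x, s (r x) = Some x) ->
     (forall y x, s y = Some x -> r x = y) -> tyM (pull s G) (ren r t) M).
Proof.
  apply ty_mutind; intros; simpl.
  - replace (pull s (csingle x [L])) with (csingle (r x) [L]); [constructor|].
    apply functional_extensionality; intro y; unfold pull, csingle.
    destruct (s y) eqn:Hs.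
    + pose proof (H0 _ _ Hs). destruct (Nat.eqb_spec n x); destruct (Nat.eqb_spec y (r x)); subst; auto;
      exfalso; try congruence; pose proof (H n); pose proof (H x); congruence.
    + destruct (Nat.eqb_spec y (r x)); subst; auto. rewrite H in Hs; discriminate.
  - replace (pull s cempty) with cempty; [constructor|].
    apply functional_extensionality; intro y; unfold pull, cempty; destruct (s y); auto.
  - rewrite <- pull_ctail. 
    pose proof (H (uprn r) (ups s) (ups_ok1 r s H0) (ups_ok2 r s H1)) as K.
    apply ty_lam in K. exact K.
  - rewrite pull_csum. econstructor; eauto.
  - rewrite pull_csum, <- pull_ctail.
    pose proof (H (uprn r) (ups s) (ups_ok1 r s H1) (ups_ok2 r s H2)) as K.
    pose proof (H0 r s H1 H2) as K'. exact (ty_es _ _ _ _ _ K K').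
  - eapply ty_convL; eauto. apply pull_eq; auto.
  - replace (pull s cempty) with cempty; [constructor|].
    apply functional_extensionality; intro y; unfold pull, cempty; destruct (s y); auto.
  - rewrite pull_csum. constructor; eauto.
  - eapply ty_convM; eauto. apply pull_eq; auto.
Qed.

Ltac inv_ren := match goal with E : _ = ren _ ?t |- _ =>
  destruct t; simpl in E; try discriminate; try (injection E; intros; subst) end.

Lemma ren_bwd :
  (forall G t' L, tyL G t' L -> forall r s t, t' = ren r t -> (forall x, s (r x) = Some x) ->
     (forall y x, s y = Some x -> r x = y) ->
     tyL (fun x => G (r x)) t L /\ (forall y, s y = None -> G y = [])) /\
  (forall G t' M, tyM G t' M -> forall r s t, t' = ren r t -> (forall x, s (r x) = Some x) ->
     (forall y x, s y = Some x -> r x = y) ->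
     tyM (fun x => G (r x)) t M /\ (forall y, s y = None -> G y = [])).
Proof.
  apply ty_mutind.
  - intros x L r s t E H0 H1. inv_ren. split.
    + replace (fun x => csingle (r n) [L] (r x)) with (csingle n [L]); [constructor|].
      apply functional_extensionality; intro y; unfold csingle.
      destruct (Nat.eqb_spec y n); destruct (Nat.eqb_spec (r y) (r n)); subst; auto;
      exfalso; try congruence; pose proof (H0 y); pose proof (H0 n); congruence.
    + intros y Hy; unfold csingle. destruct (Nat.eqb_spec y (r n)); subst; auto.
      rewrite H0 in Hy; discriminate.
  - intros b r s t E H0 H1. inv_ren. split; [constructor | auto].
  - intros G b L D IH r s t E H1 H2. inv_ren.
    destruct (IH (uprn r) (ups s) t eq_refl (ups_ok1 r s H1) (ups_ok2 r s H2)) as [K1 K2].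
    split.
    + apply ty_lam in K1. exact K1.
    + intros y Hy. apply K2. simpl. rewrite Hy. auto.
  - intros G D a b M L Da IHa Db IHb r s t E H2 H3. inv_ren.
    destruct (IHa r s t1 eq_refl H2 H3) as [K1 K2].
    destruct (IHb r s t2 eq_refl H2 H3) as [K3 K4].
    split.
    + econstructor; eauto.
    + intros y Hy; unfold csum; rewrite K2, K4; auto.
  - intros G D a b L Da IHa Db IHb r s t E H2 H3. inv_ren.
    destruct (IHa (uprn r) (ups s) t1 eq_refl (ups_ok1 r s H2) (ups_ok2 r s H3)) as [K1 K2].
    destruct (IHb r s t2 eq_refl H2 H3) as [K3 K4].
    split.
    + pose proof (ty_es _ _ _ _ _ K1 K3) as K. exact K.
    + intros y Hy; unfold csum, ctail; rewrite K2, K4; auto. simpl. rewrite Hy; auto.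
  - intros G G' t' L L' D IH c e r s t E H1 H2.
    destruct (IH r s t E H1 H2) as [K1 K2]. split.
    + eapply ty_convL; eauto. intro x; apply c.
    + intros y Hy. specialize (c y). rewrite K2 in c; auto. apply m_eq_nil; auto.
  - intros t' r s t E H1 H2. split; [constructor| auto].
  - intros G D t' L M Da IHa Db IHb r s t E H1 H2.
    destruct (IHa r s t E H1 H2) as [K1 K2].
    destruct (IHb r s t E H1 H2) as [K3 K4].
    split.
    + constructor; auto.
    + intros y Hy; unfold csum; rewrite K2, K4; auto.
  - intros G G' t' M M' D IH c e r s t E H1 H2.
    destruct (IH r s t E H1 H2) as [K1 K2]. split.
    + eapply ty_convM; eauto. intro x; apply c.
    + intros y Hy. specialize (c y). rewrite K2 in c; auto. apply m_eq_nil; auto.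
Qed.

Definition shift (k : nat) (G : tctx) : tctx := fun y => if y <? k then [] else G (y - k).
Definition sk (k : nat) : nat -> option nat := fun y => if y <? k then None else Some (y - k).

Lemma sk_ok1 : forall k x, sk k (x + k) = Some x.
Proof. intros; unfold sk. destruct (Nat.ltb_spec (x + k) k); [lia|]. f_equal; lia. Qed.
Lemma sk_ok2 : forall k y x, sk k y = Some x -> x + k = y.
Proof. intros k y x; unfold sk. destruct (Nat.ltb_spec y k); intro E; try discriminate.
  injection E; intros; lia. Qed.
Lemma pull_sk : forall k G, pull (sk k) G = shift k G.
Proof. intros; apply functional_extensionality; intro y; unfold pull, sk, shift; destruct (y <? k); auto. Qed.

Lemma lift_fwdL : forall G t L k, tyL G t L -> tyL (shift k G) (lift k t) L.
Proof. intros. rewrite <- pull_sk. apply (proj1 ren_fwd); auto using sk_ok1, sk_ok2. Qed.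
Lemma lift_fwdM : forall G t M k, tyM G t M -> tyM (shift k G) (lift k t) M.
Proof. intros. rewrite <- pull_sk. apply (proj2 ren_fwd); auto using sk_ok1, sk_ok2. Qed.

Lemma lift_bwdL : forall G t L k, tyL G (lift k t) L ->
  tyL (fun x => G (x + k)) t L /\ (forall y, y < k -> G y = []).
Proof.
  intros. destruct (proj1 ren_bwd _ _ _ H (fun i => i + k) (sk k) t eq_refl (sk_ok1 k) (sk_ok2 k)) as [K1 K2].
  split; auto. intros y Hy; apply K2; unfold sk. destruct (Nat.ltb_spec y k); auto; lia.
Qed.
Lemma lift_bwdM : forall G t M k, tyM G (lift k t) M ->
  tyM (fun x => G (x + k)) t M /\ (forall y, y < k -> G y = []).
Proof.
  intros. destruct (proj2 ren_bwd _ _ _ H (fun i => i + k) (sk k) t eq_refl (sk_ok1 k) (sk_ok2 k)) as [K1 K2].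
  split; auto. intros y Hy; apply K2; unfold sk. destruct (Nat.ltb_spec y k); auto; lia.
Qed.

Lemma ctail_shift1 : forall G, ctail (shift 1 G) = G.
Proof. intros; apply functional_extensionality; intro y; unfold ctail, shift; simpl. f_equal; lia. Qed.
Lemma unshift1 : forall G, (fun x => G (x + 1)) = ctail G.
Proof. intros; apply functional_extensionality; intro y; unfold ctail; f_equal; lia. Qed.
Lemma shift0 : forall G, shift 0 G = G.
Proof. intros; apply functional_extensionality; intro y; unfold shift; simpl. f_equal; lia. Qed.
Lemma shift_unshift : forall k G, (forall y, y < k -> G y = []) -> shift k (fun x => G (x + k)) = G.
Proof.
  intros; apply functional_extensionality; intro y; unfold shift.
  destruct (Nat.ltb_spec y k); [symmetry; auto| f_equal; lia].
Qed.
Lemma shift_lt : forall k G y, y < k -> shift k G y = [].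
Proof. intros; unfold shift. destruct (Nat.ltb_spec y k); auto; lia. Qed.

Lemma occurs_ty :
  (forall G t L, tyL G t L -> forall x, occurs x t = false -> G x = []) /\
  (forall G t M, tyM G t M -> forall x, occurs x t = false -> G x = []).
Proof.
  apply ty_mutind; intros; simpl in *; auto.
  - unfold csingle. apply Nat.eqb_neq in H. rewrite (proj2 (Nat.eqb_neq x0 x)); auto.
  - unfold ctail. apply H; auto.
  - apply orb_false_iff in H1 as [? ?]. unfold csum. rewrite H, H0; auto.
  - apply orb_false_iff in H1 as [? ?]. unfold csum, ctail. rewrite H, H0; auto.
  - specialize (c x). rewrite H in c; auto. apply m_eq_nil; auto.
  - unfold csum. rewrite H, H0; auto.
  - specialize (c x). rewrite H in c; auto. apply m_eq_nil; auto.
Qed.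


Lemma shiftS : forall G y, shift 1 G (S y) = G y.
Proof. intros; unfold shift; simpl. f_equal; lia. Qed.

Ltac cp := apply ctx_perm; intro; unfold csum, cempty, ctail, csingle; repeat rewrite shiftS; simpl; psolve.

Lemma arr_not_TN : forall M L, ty_eq (TArr M L) TN -> False.
Proof. intros M L H; inversion H. Qed.

Lemma beta_base : forall t u, typ_equiv (App (Lam t) u) (ES t u).
Proof.
  intros t u G L; split; intro H.
  - destruct (inv_app _ _ _ H _ _ eq_refl) as (G1 & D & M & L1 & H1 & H2 & c & e).
    destruct (inv_lam _ _ _ H1 _ eq_refl) as [[_ E]|(G2 & L2 & H3 & c2 & e2)]; [discriminate|].
    inversion e2; subst.
    eapply ty_convL; [apply ty_es; [exact H3| eapply tyM_conv_ty; [exact H2| apply m_eq_app_l, m_eq_sym; auto]] | |].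
    + eapply ctx_eq_trans; [|exact c]. apply csum_eq; auto using ctx_eq_refl.
    + eapply ty_eq_trans; eauto.
  - destruct (inv_es _ _ _ H _ _ eq_refl) as (G1 & D & L1 & H1 & H2 & c & e).
    eapply ty_convL; [eapply ty_app; [apply ty_lam; exact H1| exact H2] | exact c | exact e].
Qed.

Lemma app_es : forall A w u, typ_equiv (App (ES A w) u) (ES (App A (lift 1 u)) w).
Proof.
  intros A w u G L; split; intro H.
  - destruct (inv_app _ _ _ H _ _ eq_refl) as (G1 & D & M & L1 & H1 & H2 & c1 & e1).
    destruct (inv_es _ _ _ H1 _ _ eq_refl) as (G2 & D2 & L2 & H3 & H4 & c2 & e2).
    eapply ty_convL.
    + eapply tyES_eq.
      * eapply ty_app; [eapply tyL_conv_ty; [exact H3| exact e2] | apply lift_fwdM; exact H2].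
      * exact H4.
      * unfold csum. change (shift 1 D 0) with (@nil lty). rewrite app_nil_r. apply m_eq_refl.
    + eapply ctx_eq_trans; [| eapply ctx_eq_trans; [apply csum_eq; [exact c2| apply ctx_eq_refl] | exact c1]].
      cp.
    + exact e1.
  - destruct (inv_es _ _ _ H _ _ eq_refl) as (G1 & D1 & L1 & H1 & H2 & c1 & e1).
    destruct (inv_app _ _ _ H1 _ _ eq_refl) as (G2 & D2 & M & L2 & H3 & H4 & c2 & e2).
    destruct (lift_bwdM _ _ _ _ H4) as [H5 H6]. rewrite unshift1 in H5.
    assert (Z : D2 0 = []) by (apply H6; lia).
    eapply ty_convL.
    + eapply ty_app; [| exact H5].
      eapply tyES_eq; [exact H3| exact H2|]. apply m_eq_app_l.
      pose proof (c2 0) as K. unfold csum in K. rewrite Z, app_nil_r in K. apply m_eq_sym; exact K.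
    + eapply ctx_eq_trans; [| eapply ctx_eq_trans; [apply csum_eq; [apply ctail_eq; exact c2| apply ctx_eq_refl] | exact c1]].
      cp.
    + eapply ty_eq_trans; eauto.
Qed.

Lemma m_equiv : forall Sc t u, typ_equiv (App (splug Sc (Lam t)) u) (splug Sc (ES t (lift (length Sc) u))).
Proof.
  induction Sc as [|a Sc IH]; intros t u; simpl.
  - rewrite lift0. apply beta_base.
  - eapply typ_equiv_trans; [apply app_es|].
    pose proof (compat _ _ (IH t (lift 1 u)) (CESL CHole a)) as K. simpl in K.
    rewrite lift_lift in K. exact K.
Qed.

Lemma gc_base : forall t0 b, typ_equiv (ES (lift 1 t0) (Lam b)) t0.
Proof.
  intros t0 b G L; split; intro H.
  - destruct (inv_es _ _ _ H _ _ eq_refl) as (G1 & D & L1 & H1 & H2 & c & e).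
    destruct (lift_bwdL _ _ _ _ H1) as [H3 H4]. rewrite unshift1 in H3.
    rewrite (H4 0 ltac:(lia)) in H2. simpl in H2. apply tyM_single_inv in H2.
    destruct (inv_lam _ _ _ H2 _ eq_refl) as [[c2 _]|(G2 & L2 & _ & _ & e2)]; [|exfalso; eapply arr_not_TN; eauto].
    eapply ty_convL; [exact H3| | exact e].
    eapply ctx_eq_trans; [|exact c]. rewrite <- (csum_nil_r (ctail G1)) at 1.
    apply csum_eq; [apply ctx_eq_refl| apply ctx_eq_sym; exact c2].
  - pose proof (lift_fwdL _ _ _ 1 H) as H1.
    eapply tyL_conv_ctx; [eapply tyES_eq; [exact H1| apply tyM_single; apply ty_axlam| apply m_eq_refl]|].
    rewrite ctail_shift1, csum_nil_r. apply ctx_eq_refl.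
Qed.

Lemma es_comm : forall t0 A u1,
  typ_equiv (ES (lift 1 t0) (ES A u1)) (ES (ES (lift 1 (lift 1 t0)) A) u1).
Proof.
  intros t0 A u1 G L; split; intro H.
  - destruct (inv_es _ _ _ H _ _ eq_refl) as (G1 & D1 & L1 & H1 & H2 & c1 & e1).
    destruct (lift_bwdL _ _ _ _ H1) as [H3 H4]. rewrite unshift1 in H3.
    rewrite (H4 0 ltac:(lia)) in H2. simpl in H2. apply tyM_single_inv in H2.
    destruct (inv_es _ _ _ H2 _ _ eq_refl) as (G2 & D2 & L2 & H5 & H6 & c2 & e2).
    apply ty_eq_TN' in e2; subst L2.
    pose proof (lift_fwdL _ _ _ 1 (lift_fwdL _ _ _ 1 H3)) as H7.
    pose proof (ty_es _ _ _ _ _ H7 (tyM_single _ _ _ H5)) as H8.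
    pose proof (ty_es _ _ _ _ _ H8 H6) as H9.
    eapply ty_convL; [exact H9| |exact e1].
    eapply ctx_eq_trans; [| eapply ctx_eq_trans; [apply csum_eq; [apply ctx_eq_refl| exact c2] | exact c1]].
    cp.
  - destruct (inv_es _ _ _ H _ _ eq_refl) as (G1 & D1 & L1 & H1 & H2 & c1 & e1).
    destruct (inv_es _ _ _ H1 _ _ eq_refl) as (G2 & D2 & L2 & H3 & H4 & c2 & e2).
    destruct (lift_bwdL _ _ _ _ H3) as [H5 H6]. rewrite unshift1 in H5.
    destruct (lift_bwdL _ _ _ _ H5) as [H7 H8]. rewrite unshift1 in H7.
    assert (Z0 : G2 0 = []) by (apply H6; lia).
    assert (Z1 : G2 1 = []) by (apply (H8 0); lia).
    rewrite Z0 in H4. simpl in H4. apply tyM_single_inv in H4.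
    assert (H9 : tyL (csum (ctail D2) D1) (ES A u1) TN).
    { apply ty_es; auto. eapply tyM_conv_ty; [exact H2|]. apply m_eq_app_l.
      pose proof (c2 0) as K. unfold csum, ctail in K. rewrite Z1 in K. simpl in K. exact (m_eq_sym _ _ K). }
    pose proof (ty_es _ _ _ _ _ (lift_fwdL _ _ _ 1 H7) (tyM_single _ _ _ H9)) as H10.
    eapply ty_convL; [exact H10| | eapply ty_eq_trans; eauto].
    eapply ctx_eq_trans; [| eapply ctx_eq_trans; [apply csum_eq; [apply ctail_eq; exact c2| apply ctx_eq_refl] | exact c1]].
    cp.
Qed.

Lemma gcv_equiv : forall Sc t0 b,
  typ_equiv (ES (lift 1 t0) (splug Sc (Lam b))) (splug Sc (lift (length Sc) t0)).
Proof.
  induction Sc as [|a Sc IH]; intros t0 b; simpl.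
  - rewrite lift0. apply gc_base.
  - eapply typ_equiv_trans; [apply es_comm|].
    pose proof (compat _ _ (IH (lift 1 t0) b) (CESL CHole a)) as K. simpl in K.
    rewrite (lift_lift t0 (length Sc) 1) in K. exact K.
Qed.


Lemma csingle_app : forall x A B, csingle x (A ++ B) = csum (csingle x A) (csingle x B).
Proof. intros; apply functional_extensionality; intro y; unfold csum, csingle; destruct (y =? x); auto. Qed.
Lemma csingle_nil : forall x, csingle x [] = cempty.
Proof. intros; apply functional_extensionality; intro y; unfold csingle, cempty; destruct (y =? x); auto. Qed.


Lemma LtoM_fwd (a b u0 : term) (x : nat) :
  (forall G L, tyL G a L -> exists G0 M, ctx_eq G (csum G0 (csingle x M)) /\
      forall D, tyM D u0 M -> tyL (csum G0 D) b L) ->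
  forall G N, tyM G a N -> exists G0 M, ctx_eq G (csum G0 (csingle x M)) /\
      forall D, tyM D u0 M -> tyM (csum G0 D) b N.
Proof.
  intros HL G N H. remember a as a' eqn:Ea. induction H as [|G1 D1 t1 L1 M1 H H2 IHtyM|]; subst.
  - exists cempty, []. rewrite csingle_nil. split; [apply ctx_eq_refl|].
    intros D HD. eapply tyM_conv_ctx; [apply tym_nil|].
    intro y. unfold csum, cempty. rewrite (tyM_nil_inv _ _ HD y). constructor.
  - destruct (HL _ _ H) as (G0a & Ma & ca & Fa).
    destruct IHtyM as (G0b & Mb & cb & Fb); auto.
    exists (csum G0a G0b), (Ma ++ Mb). rewrite csingle_app. split.
    + eapply ctx_eq_trans; [apply csum_eq; eauto|]. cp.
    + intros D HD. destruct (tyM_split _ _ _ _ HD) as (Da & Db & Ha & Hb & cD).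
      eapply tyM_conv_ctx; [apply tym_cons; [apply Fa; exact Ha| apply Fb; exact Hb]|].
      eapply ctx_eq_trans; [| apply csum_eq; [apply ctx_eq_refl| exact cD]]. cp.
  - destruct IHtyM as (G0 & M0 & c0 & F); auto.
    exists G0, M0. split.
    + eapply ctx_eq_trans; [apply ctx_eq_sym; eauto| auto].
    + intros D HD. eapply tyM_conv_ty; eauto.
Qed.

Lemma LtoM_bwd (a b u0 : term) (x : nat) :
  (forall G L, tyL G b L -> exists G0 D M, tyM D u0 M /\ ctx_eq G (csum G0 D) /\
      tyL (csum G0 (csingle x M)) a L) ->
  forall G N, tyM G b N -> exists G0 D M, tyM D u0 M /\ ctx_eq G (csum G0 D) /\
      tyM (csum G0 (csingle x M)) a N.
Proof.
  intros HL G N H. remember b as b' eqn:Eb. induction H as [|G1 D1 t1 L1 M1 H H2 IHtyM|]; subst.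
  - exists cempty, cempty, []. rewrite csingle_nil. repeat split; [constructor| apply ctx_eq_refl| constructor].
  - destruct (HL _ _ H) as (G0a & Da & Ma & Ha & ca & Fa).
    destruct IHtyM as (G0b & Db & Mb & Hb & cb & Fb); auto.
    exists (csum G0a G0b), (csum Da Db), (Ma ++ Mb). rewrite csingle_app. repeat split.
    + apply tyM_app; auto.
    + eapply ctx_eq_trans; [apply csum_eq; eauto|]. cp.
    + eapply tyM_conv_ctx; [apply tym_cons; [exact Fa| exact Fb]|]. cp.
  - destruct IHtyM as (G0 & D0 & M0 & HH0 & c0 & F); auto.
    exists G0, D0, M0. repeat split; auto.
    + eapply ctx_eq_trans; [apply ctx_eq_sym; eauto| auto].
    + eapply tyM_conv_ty; eauto.
Qed.

Definition wfwdL W x u0 := forall G L, tyL G (wplug W (Var (x + wdepth W))) L ->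
  exists G0 M, ctx_eq G (csum G0 (csingle x M)) /\
      forall D, tyM D u0 M -> tyL (csum G0 D) (wplug W (lift (wdepth W) u0)) L.
Definition wbwdL W x u0 := forall G L, tyL G (wplug W (lift (wdepth W) u0)) L ->
  exists G0 D M, tyM D u0 M /\ ctx_eq G (csum G0 D) /\
      tyL (csum G0 (csingle x M)) (wplug W (Var (x + wdepth W))) L.

Lemma wsub : forall W x u0, wfwdL W x u0 /\ wbwdL W x u0.
Proof.
  induction W as [|W IH t|t W IH|t W IH|W IH w]; intros x u0; split; intros G L H; simpl in *.
  - rewrite Nat.add_0_r in H. pose proof (inv_var _ _ _ H x eq_refl) as Hc.
    exists cempty, [L]. split; [exact Hc|].
    intros D HD. rewrite lift0. apply tyM_single_inv; exact HD.
  - rewrite lift0 in H. exists cempty, G, [L]. repeat split.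
    + apply tyM_single; auto.
    + apply ctx_eq_refl.
    + rewrite Nat.add_0_r. apply ty_ax.
  - destruct (inv_app _ _ _ H _ _ eq_refl) as (G1 & D1 & M1 & L1 & H1 & H2 & c1 & e1).
    destruct (proj1 (IH x u0) _ _ H1) as (G0 & M & c0 & F).
    exists (csum G0 D1), M. split.
    + eapply ctx_eq_trans; [apply ctx_eq_sym; exact c1|].
      eapply ctx_eq_trans; [apply csum_eq; [exact c0| apply ctx_eq_refl]|]. cp.
    + intros D HD. eapply ty_convL; [eapply ty_app; [apply F; exact HD| exact H2]| cp | exact e1].
  - destruct (inv_app _ _ _ H _ _ eq_refl) as (G1 & D1 & M1 & L1 & H1 & H2 & c1 & e1).
    destruct (proj2 (IH x u0) _ _ H1) as (G0 & D & M & HD & c0 & F).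
    exists (csum G0 D1), D, M. repeat split; auto.
    + eapply ctx_eq_trans; [apply ctx_eq_sym; exact c1|].
      eapply ctx_eq_trans; [apply csum_eq; [exact c0| apply ctx_eq_refl]|]. cp.
    + eapply ty_convL; [eapply ty_app; [exact F| exact H2]| cp | exact e1].
  - destruct (inv_app _ _ _ H _ _ eq_refl) as (G1 & D1 & M1 & L1 & H1 & H2 & c1 & e1).
    destruct (LtoM_fwd _ _ _ _ (proj1 (IH x u0)) _ _ H2) as (G0 & M & c0 & F).
    exists (csum G1 G0), M. split.
    + eapply ctx_eq_trans; [apply ctx_eq_sym; exact c1|].
      eapply ctx_eq_trans; [apply csum_eq; [apply ctx_eq_refl| exact c0]|]. cp.
    + intros D HD. eapply ty_convL; [eapply ty_app; [exact H1| apply F; exact HD]| cp | exact e1].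
  - destruct (inv_app _ _ _ H _ _ eq_refl) as (G1 & D1 & M1 & L1 & H1 & H2 & c1 & e1).
    destruct (LtoM_bwd _ _ _ _ (proj2 (IH x u0)) _ _ H2) as (G0 & D & M & HD & c0 & F).
    exists (csum G1 G0), D, M. repeat split; auto.
    + eapply ctx_eq_trans; [apply ctx_eq_sym; exact c1|].
      eapply ctx_eq_trans; [apply csum_eq; [apply ctx_eq_refl| exact c0]|]. cp.
    + eapply ty_convL; [eapply ty_app; [exact H1| exact F]| cp | exact e1].
  - destruct (inv_es _ _ _ H _ _ eq_refl) as (G1 & D1 & L1 & H1 & H2 & c1 & e1).
    destruct (LtoM_fwd _ _ _ _ (proj1 (IH x u0)) _ _ H2) as (G0 & M & c0 & F).
    exists (csum (ctail G1) G0), M. split.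
    + eapply ctx_eq_trans; [apply ctx_eq_sym; exact c1|].
      eapply ctx_eq_trans; [apply csum_eq; [apply ctx_eq_refl| exact c0]|]. cp.
    + intros D HD. eapply ty_convL; [eapply ty_es; [exact H1| apply F; exact HD]| cp | exact e1].
  - destruct (inv_es _ _ _ H _ _ eq_refl) as (G1 & D1 & L1 & H1 & H2 & c1 & e1).
    destruct (LtoM_bwd _ _ _ _ (proj2 (IH x u0)) _ _ H2) as (G0 & D & M & HD & c0 & F).
    exists (csum (ctail G1) G0), D, M. repeat split; auto.
    + eapply ctx_eq_trans; [apply ctx_eq_sym; exact c1|].
      eapply ctx_eq_trans; [apply csum_eq; [apply ctx_eq_refl| exact c0]|]. cp.
    + eapply ty_convL; [eapply ty_es; [exact H1| exact F]| cp | exact e1].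
  - destruct (inv_es _ _ _ H _ _ eq_refl) as (G1 & D1 & L1 & H1 & H2 & c1 & e1).
    replace (x + S (wdepth W)) with (S x + wdepth W) in H1 by lia.
    destruct (proj1 (IH (S x) (lift 1 u0)) _ _ H1) as (G0 & M & c0 & F).
    exists (csum (ctail G0) D1), M. split.
    + eapply ctx_eq_trans; [apply ctx_eq_sym; exact c1|].
      eapply ctx_eq_trans; [apply csum_eq; [apply ctail_eq; exact c0| apply ctx_eq_refl]|]. cp.
    + intros D HD. pose proof (F _ (lift_fwdM _ _ _ 1 HD)) as K.
      rewrite lift_lift in K.
      eapply ty_convL; [eapply tyES_eq; [exact K| exact H2|] | | exact e1].
      * apply m_eq_app_l. pose proof (c0 0) as K0. exact K0.
      * cp.
  - destruct (inv_es _ _ _ H _ _ eq_refl) as (G1 & D1 & L1 & H1 & H2 & c1 & e1).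
    replace (lift (S (wdepth W)) u0) with (lift (wdepth W) (lift 1 u0)) in H1
      by (rewrite lift_lift; reflexivity).
    destruct (proj2 (IH (S x) (lift 1 u0)) _ _ H1) as (G0 & D & M & HD & c0 & F).
    destruct (lift_bwdM _ _ _ _ HD) as [HD' Z]. rewrite unshift1 in HD'.
    assert (Z0 : D 0 = []) by (apply Z; lia).
    exists (csum (ctail G0) D1), (ctail D), M. repeat split; auto.
    + eapply ctx_eq_trans; [apply ctx_eq_sym; exact c1|].
      eapply ctx_eq_trans; [apply csum_eq; [apply ctail_eq; exact c0| apply ctx_eq_refl]|]. cp.
    + replace (x + S (wdepth W)) with (S x + wdepth W) by lia.
      eapply ty_convL; [eapply tyES_eq; [exact F| exact H2|] | | exact e1].
      * apply m_eq_app_l. pose proof (c0 0) as K0. unfold csum in K0. rewrite Z0 in K0. exact K0.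
      * eapply ctx_eq_trans; [|apply ctx_eq_refl]. cp.
Qed.


Lemma e_equiv : forall W u,
  typ_equiv (ES (wplug W (Var (wdepth W))) u) (ES (wplug W (lift (S (wdepth W)) u)) u).
Proof.
  intros W u G L; split; intro H.
  - destruct (inv_es _ _ _ H _ _ eq_refl) as (G1 & Du & L1 & H1 & H2 & c1 & e1).
    destruct (proj1 (wsub W 0 (lift 1 u)) _ _ H1) as (G0 & M & c0 & F).
    assert (H3 : tyM Du u ((G0 0 ++ [TN]) ++ M)).
    { eapply tyM_conv_ty; [exact H2|]. eapply meq_trans; [apply m_eq_app_l; exact (c0 0)|].
      apply perm_meq. unfold csum, csingle; simpl. rewrite <- !app_assoc; apply Permutation_app_head; apply Permutation_app_comm. }
    destruct (tyM_split _ _ _ _ H3) as (Da & Db & Ha & Hb & cD).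
    pose proof (F _ (lift_fwdM _ _ _ 1 Hb)) as K. rewrite lift_lift in K.
    eapply ty_convL; [eapply tyES_eq; [exact K| exact Ha|] | | exact e1].
    + unfold csum. change (shift 1 Db 0) with (@nil lty). rewrite app_nil_r. apply m_eq_refl.
    + eapply ctx_eq_trans; [| eapply ctx_eq_trans; [apply csum_eq; [apply ctail_eq; apply ctx_eq_sym; exact c0| exact cD] | exact c1]].
      cp.
  - destruct (inv_es _ _ _ H _ _ eq_refl) as (G1 & Du & L1 & H1 & H2 & c1 & e1).
    replace (lift (S (wdepth W)) u) with (lift (wdepth W) (lift 1 u)) in H1
      by (rewrite lift_lift; reflexivity).
    destruct (proj2 (wsub W 0 (lift 1 u)) _ _ H1) as (G0 & D & M & HD & c0 & F).
    destruct (lift_bwdM _ _ _ _ HD) as [HD' Z]. rewrite unshift1 in HD'.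
    assert (Z0 : D 0 = []) by (apply Z; lia).
    pose proof (tyM_app _ _ _ _ _ H2 HD') as H3.
    eapply ty_convL; [eapply tyES_eq; [exact F| exact H3|] | | exact e1].
    + pose proof (c0 0) as K0. unfold csum in K0. rewrite Z0, app_nil_r in K0.
      eapply meq_trans; [apply m_eq_app_l, m_eq_app_l; exact K0|].
      apply perm_meq. unfold csum, csingle; simpl. rewrite <- !app_assoc; apply Permutation_app_head; apply Permutation_app_comm.
    + eapply ctx_eq_trans; [| eapply ctx_eq_trans; [apply csum_eq; [apply ctail_eq; apply ctx_eq_sym; exact c0| apply ctx_eq_refl] | exact c1]].
      cp.
Qed.

Lemma root_equiv : forall t u, root t u -> typ_equiv t u.
Proof.
  intros t u H; destruct H.
  - apply m_equiv.
  - apply e_equiv.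
  - destruct H as [b Hb]; subst v.
    assert (E1 : lift 1 (ren pred t) = t).
    { unfold lift. rewrite ren_ren. rewrite (ren_ext_occ t _ (fun i => i)).
      - apply ren_id; auto.
      - intros [|i] Hi; [congruence| simpl; lia]. }
    assert (E2 : ren (fun i => pred i + length Sc) t = lift (length Sc) (ren pred t)).
    { unfold lift. rewrite ren_ren. reflexivity. }
    rewrite E2. rewrite <- E1 at 1. apply gcv_equiv.
Qed.

Fixpoint w2c (W : wctx) : cctx :=
  match W with
  | WHole => CHole
  | WAppL W t => CAppL (w2c W) t
  | WAppR t W => CAppR t (w2c W)
  | WESR t W => CESR t (w2c W)
  | WESL W u => CESL (w2c W) u
  end.

Lemma w2c_plug : forall W s, wplug W s = cplug (w2c W) s.
Proof. induction W; intros; simpl; f_equal; auto. Qed.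

Theorem theorem6p8 :
  (forall t u : term, wstep t u -> typ_equiv t u) /\
  (forall t u : term, typ_equiv t u ->
     forall C : cctx, typ_equiv (cplug C t) (cplug C u)).
Proof.
  split.
  - intros t u H. destruct H as [W t u Hr]. rewrite !w2c_plug.
    apply compat. apply root_equiv; exact Hr.
  - exact compat.
Qed.
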